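(* Let $\mathbb{F}$ be a field, $d\geq1$ and $V$ a vector space over $\mathbb{F}$ of dimension $d+1$. Let $E^*_0,\dots,E^*_d$ be a system of mutually orthogonal idempotents in $\mathrm{End}(V)$ and $A\in\mathrm{End}(V)$ with $E^*_iAE^*_j=0$ if $|i-j|>1$ and $E^*_iAE^*_j\neq0$ if $|i-j|=1$. Assume $A$ is multiplicity-free and bipartite, with primitive idempotents $E_0,\dots,E_d$ and corresponding eigenvalues $\theta_0,\dots,\theta_d$. Let $\theta^*_0,\dots,\theta^*_d\in\mathbb{F}$ and $A^*=\sum_i\theta^*_iE^*_i$. If $(A;\{E_i\}_{i=0}^d;A^*;\{E^*_i\}_{i=0}^d)$ is a Leonard system, then for $0\le i\le d$, $\theta_i=0$ if and only if $d$ is even and $i=d/2$.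
   Context: A system of mutually orthogonal idempotents: $E^*_iE^*_j=\delta_{ij}E^*_i$, $\operatorname{rank}E^*_i=1$. $A$ multiplicity-free: $d+1$ distinct eigenvalues in $\mathbb{F}$; $E_i$ is the projection onto the $\theta_i$-eigenspace along the other eigenspaces. Bipartite: $\operatorname{tr}(E^*_iA)=0$ for all $i$. A Leonard system on $V$ is a sequence $(A;\{E_i\};A^*;\{E^*_i\})$ such that $A$ and $A^*$ are multiplicity-free, $E_0,\dots,E_d$ is an ordering of the primitive idempotents of $A$, $E^*_0,\dots,E^*_d$ is an ordering of the primitive idempotents of $A^*$, $E^*_iAE^*_j$ is $0$ if $|i-j|>1$ and nonzero if $|i-j|=1$, and $E_iA^*E_j$ is $0$ if $|i-j|>1$ and nonzero if $|i-j|=1$. *)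

(* Defs.v *)
(* End(V) for dim V = d+1 is modelled as 'M[F]_(d.+1). *)
From mathcomp Require Import all_boot all_order all_algebra.
Set Implicit Arguments. Unset Strict Implicit. Unset Printing Implicit Defensive.
Import GRing.Theory.
Local Open Scope ring_scope.

Section LS.
Variables (F : fieldType) (d : nat).
Local Notation M := 'M[F]_(d.+1).
Local Notation I := 'I_(d.+1).

Definition far (i j : I) : bool := (i.+1 < j)%N || (j.+1 < i)%N.
Definition adj (i j : I) : bool := (i.+1 == j :> nat) || (j.+1 == i :> nat).

Definition orth_idem_system (Es : I -> M) : Prop :=
  (forall i j, Es i *m Es j = if i == j then Es i else 0) /\
  (forall i, \rank (Es i) = 1%N).

Definition mult_free (A : M) : Prop :=
  exists th : I -> F, injective th /\ forall i, eigenvalue A (th i).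

(* E_0..E_d are the primitive idempotents of A, E_i belonging to eigenvalue th_i:
   E_i is the projection onto the th_i-eigenspace along the other eigenspaces. *)
Definition prim_idems (A : M) (E : I -> M) (th : I -> F) : Prop :=
  [/\ injective th,
      (forall i j, E i *m E j = if i == j then E i else 0),
      \sum_i E i = 1%:M,
      (forall i, A *m E i = th i *: E i) &
      (forall i, E i != 0) ].

Definition tridiag (Es : I -> M) (X : M) : Prop :=
  (forall i j, far i j -> Es i *m X *m Es j = 0) /\
  (forall i j, adj i j -> Es i *m X *m Es j != 0).

Definition bipartite (Es : I -> M) (A : M) : Prop :=
  forall i, \tr (Es i *m A) = 0.

Definition leonard_system (A : M) (E : I -> M) (As : M) (Es : I -> M) : Prop :=
  [/\ mult_free A /\ mult_free As,
      (exists th, prim_idems A E th),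
      (exists ths, prim_idems As Es ths),
      tridiag Es A & tridiag E As ].

End LS.

(* Main.v *)
Require Import Defs.
From mathcomp Require Import all_boot all_order all_algebra zify ring.
Import GRing.Theory.
Local Open Scope ring_scope.


Lemma rank1_sandwich (F : fieldType) n (P X : 'M[F]_n) :
  \rank P = 1%N -> P *m X *m P = \tr (P *m X) *: P.
Proof.
move=> r1; rewrite -(mulmx_base P).
move: (col_base P) (row_base P); rewrite r1 => c r.
have -> : c *m r *m X *m (c *m r) = c *m (r *m X *m c) *m r by rewrite !mulmxA.
have -> : \tr (c *m r *m X) = \tr (r *m X *m c) by rewrite -mulmxA mxtrace_mulC.
rewrite [r *m X *m c]mx11_scalar mul_mx_scalar -scalemxAl mxtrace_scalar.
by [].
Qed.

Lemma orth_suml (F : fieldType) n (I : finType) (X : I -> 'M[F]_n) (a : I -> F) j :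
  (forall i j, X i *m X j = if i == j then X i else 0) ->
  (\sum_i a i *: X i) *m X j = a j *: X j.
Proof.
move=> hX; rewrite mulmx_suml (bigD1 j) //= -scalemxAl hX eqxx big1 ?addr0 //.
by move=> i /negbTE nij; rewrite -scalemxAl hX nij scaler0.
Qed.

Lemma orth_sumr (F : fieldType) n (I : finType) (X : I -> 'M[F]_n) (a : I -> F) j :
  (forall i j, X i *m X j = if i == j then X i else 0) ->
  X j *m (\sum_i a i *: X i) = a j *: X j.
Proof.
move=> hX; rewrite mulmx_sumr (bigD1 j) //= -scalemxAr hX eqxx big1 ?addr0 //.
by move=> i /negbTE nij; rewrite -scalemxAr hX eq_sym nij scaler0.
Qed.

Lemma sum_decomp (F : fieldType) n (I : finType) (X : I -> 'M[F]_n) (A : 'M[F]_n) :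
  \sum_i X i = 1%:M -> A = \sum_i \sum_j X i *m A *m X j.
Proof.
move=> hs; transitivity ((\sum_i X i) *m A *m (\sum_i X i)); first by rewrite hs mul1mx mulmx1.
rewrite !mulmx_suml; apply: eq_bigr => i _; by rewrite mulmx_sumr.
Qed.


Lemma path_aut d (s : 'I_d.+1 -> 'I_d.+1) : (1 <= d)%N -> injective s ->
  (forall i j : 'I_d.+1, adj i j -> adj (s i) (s j)) ->
  (forall i, s i = i) \/ (forall i, (s i : nat) = d - i)%N.
Proof.
move=> hd sinj sadj.
pose f k := nat_of_ord (s (inord k)).
have fle k : (f k <= d)%N by rewrite /f -ltnS ltn_ord.
have finj a b : (a <= d)%N -> (b <= d)%N -> f a = f b -> a = b.
  move=> ha hb /val_inj /sinj /(congr1 val) /=; rewrite !inordK //.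
have fadj k : (k < d)%N -> f k.+1 = (f k).+1 \/ f k = (f k.+1).+1.
  move=> hk; have := sadj (inord k) (inord k.+1).
  rewrite /adj !inordK ?eqxx //=; last by lia.
  move=> /(_ isT) /orP [/eqP|/eqP] ->; [by left| by right].
have fi i : s i = s (inord i) by rewrite inord_val.
have fE k : f k = s (inord k) by [].
clearbody f.
case: (fadj 0%N hd) => h01.
- have key k : (k < d)%N -> f k = (f 0%N + k)%N /\ f k.+1 = (f 0%N + k.+1)%N.
    elim: k => [|k IH] hk; first by rewrite addn0 h01 addn1.
    have [IH1 IH2] := IH (ltnW hk); split => //.
    case: (fadj k.+1 hk) => h; first by lia.
    have : k = k.+2 by apply: finj; lia.
    lia.
  have hd' : f d = (f 0%N + d)%N by have := key d.-1; rewrite prednK //; case; lia.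
  have f00 : f 0%N = 0%N by have := fle d; lia.
  left => i; apply: val_inj; rewrite /= fi -fE.
  have hi : (i <= d)%N by rewrite -ltnS ltn_ord.
  case: (posnP i) => [-> // | ip].
  have := key i.-1; rewrite prednK //; case; lia.
- have key k : (k < d)%N -> (f k + k = f 0%N)%N /\ (f k.+1 + k.+1 = f 0%N)%N.
    elim: k => [|k IH] hk; first by rewrite addn0 h01 addn1.
    have [IH1 IH2] := IH (ltnW hk); split => //.
    case: (fadj k.+1 hk) => h; last by lia.
    have : k = k.+2 by apply: finj; lia.
    lia.
  have hd' : (f d + d = f 0%N)%N by have := key d.-1; rewrite prednK //; case; lia.
  have f00 : f 0%N = d by have := fle 0%N; lia.
  right => i; rewrite fi -fE.
  have hi : (i <= d)%N by rewrite -ltnS ltn_ord.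
  case: (posnP i) => [-> | ip]; first by rewrite subn0.
  have := key i.-1; rewrite prednK //; case; lia.
Qed.


Lemma far_par d (k l : 'I_d.+1) : odd k = odd l -> k != l -> far k l.
Proof.
move=> hp hne; rewrite /far; case/boolP: ((k.+1 < l)%N || (l.+1 < k)%N) => // hf.
have : (k.+1 == l :> nat) || (l.+1 == k :> nat).
  move: hf hne; rewrite -val_eqE /=; lia.
by case/orP => /eqP h; move: hp; rewrite -h /=; case: (odd _).
Qed.

Lemma adj_neq d (k l : 'I_d.+1) : adj k l -> k != l.
Proof. rewrite /adj -val_eqE /=; lia. Qed.

Lemma nfar_adj d (k l : 'I_d.+1) : ~~ far k l -> k != l -> adj k l.
Proof. rewrite /adj /far -val_eqE /=; lia. Qed.

Lemma adj_sign (F : fieldType) d (k l : 'I_d.+1) : adj k l ->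
  (-1) ^+ k * (-1) ^+ l = - 1 :> F.
Proof.
rewrite -exprD -signr_odd /adj => /orP [] /eqP <-.
  by rewrite addnS addnn /= odd_double.
by rewrite addSn addnn /= odd_double.
Qed.

Lemma sign_sq (F : fieldType) (k : nat) : (-1) ^+ k * (-1) ^+ k = 1 :> F.
Proof. by rewrite -exprD -signr_odd addnn odd_double. Qed.

Lemma char2_sq (F : fieldType) (a b : F) : 2 = 0 :> F -> a ^+ 2 - b ^+ 2 = (a - b) ^+ 2.
Proof.
move=> h2; have -> : a ^+ 2 - b ^+ 2 = (a - b) ^+ 2 + 2 * (a * b - b ^+ 2) by ring.
by rewrite h2 mul0r addr0.
Qed.

Lemma half0 (F : fieldType) (x : F) : 2 != 0 :> F -> x = - x -> x = 0.
Proof.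
move=> h2 hx; have : 2 * x = 0 by rewrite mulr2n mulrDl !mul1r {1}hx addNr.
by move/eqP; rewrite mulf_eq0 (negbTE h2) /= => /eqP.
Qed.

Theorem corollary11p3 (F : fieldType) (d : nat) (hd : (1 <= d)%N)
  (Es : 'I_(d.+1) -> 'M[F]_(d.+1)) (A : 'M[F]_(d.+1))
  (E : 'I_(d.+1) -> 'M[F]_(d.+1)) (th ths : 'I_(d.+1) -> F) :
  orth_idem_system Es ->
  tridiag Es A ->
  mult_free A ->
  bipartite Es A ->
  prim_idems A E th ->
  leonard_system A E (\sum_i ths i *: Es i) Es ->
  forall i : 'I_(d.+1), th i = 0 <-> (~~ odd d /\ (i : nat) = d./2).
Proof.
move=> [hEsEs hrk] [hfar _] _ hbip [thinj hEE hEsum hAE hEnz].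
move=> [_ _ [ths' [_ _ hEssum _ _]] _ [hEfar hEadj]].
set As := \sum_i ths i *: Es i in hEfar hEadj.
have f0 k : Es k *m A *m Es k = 0 by rewrite rank1_sandwich // hbip scale0r.
have hAsum : A = \sum_k th k *: E k.
  by rewrite -[A]mulmx1 -hEsum mulmx_sumr; apply: eq_bigr => k _; apply: hAE.
have hEA j : E j *m A = th j *: E j by rewrite {1}hAsum orth_sumr.
have th01 : inord 0 != inord 1 :> 'I_d.+1.
  by rewrite -val_eqE /= !inordK.
case: (eqVneq (2 : F) 0) => h2.
  exfalso.
  pose P (b : bool) := \sum_(k : 'I_d.+1 | odd k == b) Es k.
  have hPQ b : P b + P (~~ b) = 1%:M.
    rewrite /P -hEssum [in RHS](bigID (fun k : 'I_d.+1 => odd k == b)) /=.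
    by congr (_ + _); apply: eq_bigl => k; case: b; case: odd.
  have hPAP b : P b *m A *m P b = 0.
    rewrite /P !mulmx_suml big1 // => k hk; rewrite mulmx_sumr big1 // => l hl.
    case: (eqVneq k l) => [<-|nkl]; first exact: f0.
    by apply: hfar; apply: far_par => //; rewrite (eqP hk) (eqP hl).
  have hPA b : P b *m A = P b *m A *m P (~~ b).
    by rewrite -{1}[P b *m A]mulmx1 -(hPQ b) mulmxDr hPAP add0r.
  have hAP b : A *m P b = P (~~ b) *m A *m P b.
    by rewrite -{1}[A]mul1mx -(hPQ (~~ b)) negbK !mulmxDl hPAP addr0.
  set P0 := P false. set Q := P true.
  have hPA0 : P0 *m A = P0 *m A *m Q := hPA false.
  have hQA : Q *m A = Q *m A *m P0 := hPA true.
  have hAP0 : A *m P0 = Q *m A *m P0 := hAP false.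
  have hAQ : A *m Q = P0 *m A *m Q := hAP true.
  have hQ : Q = 1%:M - P0 by rewrite -(hPQ false) addrC addKr.
  clearbody P0 Q.
  have hcomm : P0 *m (A *m A) = A *m A *m P0.
    rewrite mulmxA hPA0 -mulmxA hQA -[A *m A *m P0]mulmxA hAP0 !mulmxA.
    by rewrite [in RHS]hAQ.
  have hEAA j : E j *m A *m A = th j ^+ 2 *: E j.
    by rewrite hEA -scalemxAl hEA scalerA expr2.
  have hAA k : A *m (A *m E k) = th k ^+ 2 *: E k.
    by rewrite hAE -scalemxAr hAE scalerA expr2.
  have hEPE j k : j != k -> E j *m P0 *m E k = 0.
    move=> njk.
    have e0 : E j *m (A *m A *m P0) *m E k = E j *m (P0 *m (A *m A)) *m E k.
      by rewrite hcomm.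
    rewrite !mulmxA hEAA -[E j *m P0 *m A *m A *m E k]mulmxA in e0.
    rewrite -[E j *m P0 *m A *m (A *m E k)]mulmxA hAA -!scalemxAl -scalemxAr in e0.
    move/eqP: e0; rewrite -subr_eq0 -scalerBl scaler_eq0 char2_sq //.
    rewrite sqrf_eq0 subr_eq0 (inj_eq thinj) (negbTE njk) /= => /eqP //.
  have hPE k : P0 *m E k = E k *m P0.
    have -> : P0 *m E k = E k *m P0 *m E k.
      rewrite -{1}[P0]mul1mx -hEsum !mulmx_suml (bigD1 k) //= big1 ?addr0 //.
      by move=> j hj; apply: hEPE.
    rewrite -{2}[E k *m P0]mulmx1 -hEsum mulmx_sumr (bigD1 k) //= big1 ?addr0 //.
    by move=> j hj; apply: hEPE; rewrite eq_sym.
  have hth k : th k = 0.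
    have e1 : P0 *m A *m E k = th k *: (E k *m P0).
      by rewrite -mulmxA hAE -scalemxAr hPE.
    have e2 : P0 *m A *m E k = th k *: E k - th k *: (E k *m P0).
      rewrite hPA0 -hAQ hQ mulmxBr mulmx1 mulmxBl hAE -mulmxA hPE mulmxA hAE.
      by rewrite -scalemxAl.
    have : th k *: E k = 0.
      rewrite -(subrK (th k *: (E k *m P0)) (th k *: E k)) -e2 e1 -scalerDl.
      by rewrite -mulr2n -mulr_natl h2 mul0r scale0r.
    by move/eqP; rewrite scaler_eq0 (negbTE (hEnz k)) orbF => /eqP.
  by move/negP: th01; apply; apply/eqP/thinj; rewrite !hth.
pose D := \sum_(k : 'I_d.+1) (-1) ^+ k *: Es k.
have hDEs k : D *m Es k = (-1) ^+ k *: Es k by rewrite orth_suml.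
have hEsD k : Es k *m D = (-1) ^+ k *: Es k by rewrite orth_sumr.
have hDdef : D = \sum_(k : 'I_d.+1) (-1) ^+ k *: Es k by [].
clearbody D.
have hDD : D *m D = 1%:M.
  rewrite -hEssum {2}hDdef mulmx_sumr; apply: eq_bigr => k _.
  by rewrite -scalemxAr hDEs scalerA sign_sq scale1r.
have hDAD : D *m A *m D = - A.
  rewrite {1 2}(@sum_decomp _ _ _ Es A hEssum) mulmx_sumr mulmx_suml -sumrN.
  apply: eq_bigr => k _; rewrite mulmx_sumr mulmx_suml -sumrN.
  apply: eq_bigr => l _.
  rewrite !mulmxA hDEs -!scalemxAl -mulmxA hEsD -scalemxAr scalerA.
  case: (eqVneq k l) => [<-|nkl]; first by rewrite f0 scaler0 oppr0.
  case/boolP: (far k l) => hkl; first by rewrite hfar // scaler0 oppr0.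
  by rewrite adj_sign ?scaleN1r //; apply: nfar_adj.
have hDAs : D *m As *m D = As.
  have -> : D *m As = As *m D.
    rewrite /As mulmx_sumr mulmx_suml; apply: eq_bigr => k _.
    by rewrite -scalemxAr -scalemxAl hDEs hEsD.
  by rewrite -mulmxA hDD mulmx1.
have hAD : A *m D = - (D *m A).
  by rewrite -[A *m D]mul1mx -hDD -mulmxA [D *m (A *m D)]mulmxA hDAD mulmxN.
pose Fm k := D *m E k *m D.
have hAF k : A *m Fm k = - th k *: Fm k.
  rewrite /Fm !mulmxA hAD !mulNmx -(mulmxA D A) hAE -scalemxAr -!scalemxAl.
  by rewrite scaleNr.
have hEF j k : th j + th k != 0 -> E j *m Fm k = 0.
  move=> hjk; apply/eqP.
  have e : E j *m A *m Fm k = E j *m (A *m Fm k) by rewrite mulmxA.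
  rewrite hEA hAF -scalemxAl -scalemxAr in e.
  move/eqP: e; rewrite -subr_eq0 -scalerBl opprK scaler_eq0 (negbTE hjk) /=.
  by [].
have hFsum : \sum_k Fm k = 1%:M.
  by rewrite /Fm -mulmx_suml -mulmx_sumr hEsum mulmx1 hDD.
have hFnz k : Fm k != 0.
  apply: contraNneq (hEnz k) => hF.
  have -> : E k = D *m Fm k *m D.
    by rewrite /Fm !mulmxA hDD mul1mx -mulmxA hDD mulmx1.
  by rewrite hF mulmx0 mul0mx.
have hex k : exists j, th j = - th k.
  case: (pickP (fun j => th j == - th k)) => [j /eqP hj|hn]; first by exists j.
  exfalso; move/negP: (hFnz k); apply; apply/eqP.
  rewrite -[Fm k]mul1mx -hEsum mulmx_suml big1 // => j _; apply: hEF.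
  by rewrite addr_eq0 hn.
pose s k := odflt k [pick j | th j == - th k].
have hs k : th (s k) = - th k.
  rewrite /s; case: (pickP (fun j => th j == - th k)) => [j /eqP //|hn].
  by have [j hj] := hex k; move: (hn j); rewrite hj eqxx.
have hsF k : Fm k = E (s k).
  have e1 : Fm k = E (s k) *m Fm k.
    rewrite -{1}[Fm k]mul1mx -hEsum mulmx_suml (bigD1 (s k)) //= big1 ?addr0 //.
    move=> j hj; apply: hEF; rewrite addr_eq0 -hs.
    by apply: contra hj => /eqP /thinj ->.
  have e2 : E (s k) = E (s k) *m Fm k.
    rewrite -{1}[E (s k)]mulmx1 -hFsum mulmx_sumr (bigD1 k) //= big1 ?addr0 //.
    move=> j hj; apply: hEF; rewrite hs addrC subr_eq0.
    by apply: contra hj => /eqP /thinj ->.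
  by rewrite e1 -e2.
have sinj : injective s.
  by move=> a b hab; apply: thinj; apply: oppr_inj; rewrite -!hs hab.
have hDD' (X : 'M[F]_d.+1) : X *m D *m D = X by rewrite -mulmxA hDD mulmx1.
have sadj a b : adj a b -> adj (s a) (s b).
  move=> hab; apply: nfar_adj; last by rewrite (inj_eq sinj) adj_neq.
  apply/negP => hf; move: (hEfar _ _ hf); rewrite -!hsF /Fm.
  have -> : D *m E a *m D *m As *m (D *m E b *m D) = D *m (E a *m As *m E b) *m D.
    by rewrite -[in LHS]hDAs !mulmxA !hDD'.
  move=> h0; move/negP: (hEadj a b hab); apply; apply/eqP.
  have -> : E a *m As *m E b = D *m (D *m (E a *m As *m E b) *m D) *m D.
    by rewrite !mulmxA hDD mul1mx !hDD'.
  by rewrite h0 mulmx0 mul0mx.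

case: (@path_aut d s hd sinj sadj) => [hsid | hsrev].
  have hz k : th k = 0.
    by apply: half0 => //; have := hs k; rewrite hsid.
  by exfalso; move/negP: th01; apply; apply/eqP/thinj; rewrite !hz.
move=> i; split.
  move=> h0; have : s i = i by apply: thinj; rewrite hs h0 oppr0.
  move/(congr1 val) => /=; rewrite hsrev => hi; have hle := ltn_ord i.
  have e : d = (i + i)%N by lia.
  have -> : d./2 = i by rewrite [in LHS]e addnn doubleK.
  by have -> : odd d = false by rewrite [in LHS]e addnn odd_double.
case=> hev hi.
have e : s i = i.
  apply: val_inj; rewrite /= hsrev; have := odd_double_half d.
  rewrite (negbTE hev) /= add0n -addnn; lia.
by apply: half0 => //; rewrite -{1}e hs.
Qed.
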